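(* Assume every node of $G$ belongs to at least one $h$-clique, and let $f^*$ be any maximum flow in $\mathcal{H}$. For an independent component set $\mathcal{C}$ define $g(\mathcal{C})=\mathcal{C}\cup des(\mathcal{C})$. Then $g$ is a bijection from the family of independent component sets onto the family of d-closed component sets.
   Context: Let $G=(V,E)$ be a finite simple undirected graph and $h\ge2$. An $h$-clique is a set of $h$ pairwise adjacent nodes; $\mu_h(G[W])$ counts $h$-cliques inside $W$; for nonempty $W$, $\rho_h(W)=\mu_h(G[W])/|W|$; $\rho_h^*=\max_{\emptyset\ne W\subseteq V}\rho_h(W)$; $deg_G(v,h)$ is the number of $h$-cliques containing $v$; $\Lambda$ is the set of $(h-1)$-cliques of $G$ contained in some $h$-clique. Flow network $\mathcal{H}=(V_\mathcal{H},E_\mathcal{H},c)$: $V_\mathcal{H}=V\cup\Lambda\cup\{s,t\}$; for $v\in V$: arcs $(s,v)$ cap. $deg_G(v,h)$, $(v,t)$ cap. $h\rho_h^*$, $(v,s),(t,v)$ cap. $0$; for $\lambda\in\Lambda$, $v\in\lambda$: $(\lambda,v)$ cap. $+\infty$, $(v,\lambda)$ cap. $0$; for $\lambda\in\Lambda$, $v\in V$ with $\lambda\cup\{v\}$ an $h$-clique: $(v,\lambda)$ cap. $1$, $(\lambda,v)$ cap. $0$; no other arcs. A flow $f$ satisfies $f(u,v)\le c(u,v)$, $f(v,u)=-f(u,v)$, conservation at nodes other than $s,t$. The residual graph $\mathcal{H}_{f}$ has an arc $(u,v)$ whenever $(u,v)\in E_\mathcal{H}$ and $c(u,v)-f(u,v)>0$.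 The condensation $\mathcal{H}^C$ has the SCCs of $\mathcal{H}_{f^*}$ as nodes, with an arc $C\to C'$ ($C\ne C'$) whenever $\mathcal{H}_{f^*}$ has an arc from a node of $C$ to a node of $C'$. A non-trivial component is an SCC containing neither $s$ nor $t$. For a non-trivial component $C$, $des(C)$ (resp. $anc(C)$) is the set of non-trivial components $C'$ such that $\mathcal{H}^C$ has a directed path of length $\ge1$ from $C$ to $C'$ (resp. from $C'$ to $C$); for a set $\mathcal{C}$, $des(\mathcal{C})=\bigcup_{C\in\mathcal{C}}des(C)$. An independent component set is a set $\mathcal{C}$ of non-trivial components with $C\cap V\neq\emptyset$ for all $C\in\mathcal{C}$ and $C_1\notin des(C_2)$ for all $C_1,C_2\in\mathcal{C}$. A d-closed component set is a set $\mathcal{C}$ of non-trivial components such that every $C\in\mathcal{C}$ with $C\cap V=\emptyset$ has an incoming arc in $\mathcal{H}^C$ from some $C'\in\mathcal{C}$, and $des(\mathcal{C})\subseteq\mathcal{C}$. *)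

(* Defs.v *)
From HB Require Import structures.
From mathcomp Require Import all_boot all_order all_algebra.
From mathcomp Require Import reals.
Set Implicit Arguments.
Unset Strict Implicit.
Unset Printing Implicit Defensive.
Import Order.TTheory GRing.Theory Num.Theory.
Local Open Scope ring_scope.

Section Graph.
Variables (T : finType) (e : rel T) (h : nat).

Definition is_clique (S : {set T}) : bool :=
  [forall x in S, forall y in S, (x != y) ==> e x y].

Definition hclique (S : {set T}) : bool := is_clique S && (#|S| == h)%N.

Definition mu (W : {set T}) : nat := #|[set S | hclique S & S \subset W]|.

Definition hdeg (v : T) : nat := #|[set S | hclique S & v \in S]|.

Definition Lambda : {set {set T}} :=
  [set L | [&& is_clique L, (#|L| == h.-1)%N & [exists S, hclique S && (L \subset S)]]].

Definition lamT := {L : {set T} | L \in Lambda}.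

Definition node : finType := ((T + lamT) + bool)%type.

Definition vtx (v : T) : node := inl (inl v).
Definition lam (L : lamT) : node := inl (inr L).
Definition src : node := inr true.
Definition snk : node := inr false.

Definition isArc (u v : node) : bool :=
  match u, v with
  | inr true, inl (inl _) => true
  | inl (inl _), inr false => true
  | inl (inl _), inr true => true
  | inr false, inl (inl _) => true
  | inl (inr L), inl (inl x) => (x \in val L) || hclique (x |: val L)
  | inl (inl x), inl (inr L) => (x \in val L) || hclique (x |: val L)
  | _, _ => false
  end.

Section Real.
Variable R : realType.

Definition rho_star : R :=
  \big[Num.max/0]_(W : {set T} | W != set0) ((mu W)%:R / (#|W|)%:R).

(* capacities; None stands for +infinity; non-arcs get capacity 0 *)
Definition cap (u v : node) : option R :=
  match u, v with
  | inr true, inl (inl x) => Some (hdeg x)%:R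
  | inl (inl _), inr false => Some (h%:R * rho_star)
  | inl (inr L), inl (inl x) => if x \in val L then None else Some 0
  | inl (inl x), inl (inr L) =>
      if (x \notin val L) && hclique (x |: val L) then Some 1 else Some 0
  | _, _ => Some 0
  end.

Definition cap_le (x : R) (c : option R) : bool :=
  if c is Some c' then x <= c' else true.

Definition is_flow (f : node -> node -> R) : Prop :=
  [/\ forall u v, cap_le (f u v) (cap u v),
      forall u v, f v u = - f u v &
      forall u, u != src -> u != snk -> \sum_(w : node) f u w = 0].

Definition flow_value (f : node -> node -> R) : R := \sum_(w : node) f src w.

Definition is_max_flow (f : node -> node -> R) : Prop :=
  is_flow f /\ forall g, is_flow g -> flow_value g <= flow_value f.

Definition resid (f : node -> node -> R) : rel node := fun u v =>
  isArc u v && (if cap u v is Some c then f u v < c else true).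

End Real.

Section Components.
Variable r : rel node.

Definition scc_of (x : node) : {set node} :=
  [set y | connect r x y && connect r y x].
Definition is_scc (C : {set node}) : bool := [exists x, C == scc_of x].

Definition nontrivial (C : {set node}) : bool :=
  [&& is_scc C, src \notin C & snk \notin C].

Definition cond : rel {set node} := fun C C' =>
  [&& is_scc C, is_scc C', C != C' & [exists u in C, exists v in C', r u v]].

Definition des (C : {set node}) : {set {set node}} :=
  [set C' | nontrivial C' && [exists C'', cond C C'' && connect cond C'' C']].

Definition desS (Cs : {set {set node}}) : {set {set node}} :=
  \bigcup_(C in Cs) des C.

Definition hasV (C : {set node}) : bool := [exists v, vtx v \in C].

Definition independent (Cs : {set {set node}}) : bool :=
  [forall C in Cs, nontrivial C && hasV C] &&
  [forall C1 in Cs, forall C2 in Cs, C1 \notin des C2].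

Definition dclosed (Cs : {set {set node}}) : bool :=
  [forall C in Cs, nontrivial C &&
      (~~ hasV C ==> [exists C' in Cs, cond C' C])] &&
  (desS Cs \subset Cs).

Definition gmap (Cs : {set {set node}}) : {set {set node}} := Cs :|: desS Cs.

End Components.
End Graph.

(* Main.v *)
Require Import Defs.
From HB Require Import structures.
From mathcomp Require Import all_boot all_order all_algebra.
From mathcomp Require Import reals ring lra.
Set Implicit Arguments.
Unset Strict Implicit.
Unset Printing Implicit Defensive.
Section Comb.
Variables (T : finType) (e : rel T) (h : nat).
Hypothesis Hh : (2 <= h)%N.

Definition inW (W : {set T}) x := [set K | [&& hclique e h K, x \in K & K \subset W]].
Definition outW (W : {set T}) x := [set K | [&& hclique e h K, x \in K & ~~ (K \subset W)]].
Definition cntW (W : {set T}) x :=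
  [set L : lamT e h | [&& ~~ (val L \subset W), x \notin val L & hclique e h (x |: val L)]].

Lemma clique_sub (K L : {set T}) : is_clique e K -> L \subset K -> is_clique e L.
Proof.
move=> /forallP cK /subsetP LK; apply/forallP=> a; apply/implyP=> aL.
apply/forallP=> b; apply/implyP=> bL.
by move: (cK a); rewrite (LK _ aL) /= => /forallP /(_ b); rewrite (LK _ bL).
Qed.

Lemma hdeg_split (W : {set T}) x : (hdeg e h x <= #|inW W x| + #|outW W x|)%N.
Proof.
rewrite -cardsUI; apply: leq_trans (leq_addr _ _).
apply: subset_leq_card; apply/subsetP=> K; rewrite !inE => /andP[hK xK].
by rewrite hK xK /=; case: (K \subset W).
Qed.

Lemma outW_cnt (W : {set T}) x : x \in W -> (#|outW W x| <= #|cntW W x|)%N.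
Proof.
move=> xW.
rewrite -(@card_in_imset _ _ (fun K => K :\ x) (mem (outW W x))); last first.
  move=> K1 K2; rewrite /= !inE => /and3P[_ x1 _] /and3P[_ x2 _] eq.
  by rewrite -(setD1K x1) -(setD1K x2) eq.
apply: leq_trans (leq_imset_card val _).
apply: subset_leq_card; apply/subsetP=> L /imsetP[K KB ->]; move: KB.
rewrite inE => /and3P[hK xK nKW].
have LL : K :\ x \in Lambda e h.
  move: (hK) => /andP[cK /eqP cardK].
  rewrite inE (clique_sub cK (subD1set _ _)) /=.
  apply/andP; split; first by rewrite -cardK (cardsD1 x K) xK.
  by apply/existsP; exists K; rewrite hK subD1set.
apply/imsetP; exists (exist _ (K :\ x) LL) => //.
rewrite inE /= setD11 (setD1K xK) hK !andbT.
apply/negP=> sub; case/negP: nKW; rewrite -(setD1K xK).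
by apply/subsetP=> y /setU1P[->|/(subsetP sub)].
Qed.

Lemma double_count (W : {set T}) : (\sum_(x in W) #|inW W x| = h * mu e h W)%N.
Proof.
have -> : (\sum_(x in W) #|inW W x| =
    \sum_(x in W) \sum_(K in [set K | hclique e h K & K \subset W]) (x \in K))%N.
  apply: eq_bigr=> x _; rewrite -sum1_card big_mkcond /= [RHS]big_mkcond /=.
  apply: eq_bigr=> K _; rewrite !inE.
  by case: (hclique e h K); case: (x \in K); case: (K \subset W).
rewrite exchange_big /= /mu mulnC -sum_nat_const.
apply: eq_bigr=> K; rewrite inE => /andP[/andP[_ /eqP cK] KW].
rewrite -cK -sum1_card big_mkcond /= [RHS]big_mkcond /=.
apply: eq_bigr=> y _; case yK: (y \in K) => /=; last by case: (y \in W).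
by rewrite (subsetP KW _ yK).
Qed.

Lemma mu_set0 : mu e h set0 = 0%N.
Proof.
apply/eqP; rewrite cards_eq0; apply/eqP/setP=> K; rewrite !inE.
apply/negP=> /andP[/andP[_ /eqP cK]]; rewrite subset0 => /eqP K0.
by move: cK Hh; rewrite K0 cards0 => <-.
Qed.

End Comb.

Section Gen.
Variables (T : finType) (e : rel T) (h : nat).
Variable r : rel (node e h).
Local Notation N := (node e h).
Local Notation cnd := (cond r).

Lemma in_scc x y : (y \in scc_of r x) = connect r x y && connect r y x.
Proof. by rewrite inE. Qed.

Lemma scc_self x : x \in scc_of r x.
Proof. by rewrite in_scc connect0. Qed.

Lemma scc_eq C y : is_scc r C -> y \in C -> C = scc_of r y.
Proof.
move=> /existsP[x /eqP->] /[!in_scc] /andP[xy yx].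
apply/setP=> z; rewrite !in_scc; apply/andP/andP=> [[xz zx]|[yz zy]].
  by split; [apply: connect_trans yx xz | apply: connect_trans zx xy].
by split; [apply: connect_trans xy yz | apply: connect_trans zy yx].
Qed.

Lemma scc_conn C a b : is_scc r C -> a \in C -> b \in C -> connect r a b.
Proof.
move=> sC aC bC; move: (bC); rewrite (scc_eq sC aC) in_scc; by case/andP.
Qed.

Lemma cond_conn C C' a b : cnd C C' -> a \in C -> b \in C' -> connect r a b.
Proof.
case/and4P=> sC sC' _ /existsP[u /andP[uC /existsP[v /andP[vC' ruv]]]] aC bC'.
apply: connect_trans (scc_conn sC aC uC) _.
apply: connect_trans (connect1 ruv) _; exact: scc_conn sC' vC' bC'.
Qed.

Lemma cconn_conn C C' a b : is_scc r C -> connect cnd C C' -> a \in C -> b \in C' ->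
  connect r a b.
Proof.
move=> sC /connectP[p]; elim: p C sC a => [|C1 p IH] C sC a /=.
  by move=> _ -> aC bC; exact: scc_conn sC aC bC.
case/andP=> cC1 pp Cl aC bC'.
have sC1 : is_scc r C1 by case/and4P: cC1.
have [c cC1'] : exists c, c \in C1.
  by case/existsP: sC1 => x /eqP->; exists x; exact: scc_self.
apply: connect_trans (cond_conn cC1 aC cC1') _.
exact: IH sC1 c pp Cl cC1' bC'.
Qed.

Lemma cond_acyc C C'' : cnd C C'' -> connect cnd C'' C -> False.
Proof.
move=> cC; move: (cC); case/and4P=> sC sC' neq /existsP[u /andP[uC /existsP[v /andP[vC' ruv]]]] cc.
have vu := cconn_conn sC' cc vC' uC.
have vC : v \in C by rewrite (scc_eq sC uC) in_scc connect1.
by move: neq; rewrite (scc_eq sC vC) (scc_eq sC' vC') eqxx.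
Qed.

Definition sreach C C' := [exists C'', cnd C C'' && connect cnd C'' C'].

Lemma in_des C C' : (C' \in des r C) = nontrivial r C' && sreach C C'.
Proof. by rewrite inE. Qed.

Lemma sreach_trans C1 C2 C3 : sreach C1 C2 -> sreach C2 C3 -> sreach C1 C3.
Proof.
case/existsP=> D /andP[c1 p1] /existsP[D' /andP[c2 p2]].
apply/existsP; exists D; rewrite c1 /=.
apply: connect_trans p1 _; apply: connect_trans (connect1 c2) p2.
Qed.

Lemma des_trans C1 C2 C3 : C2 \in des r C1 -> C3 \in des r C2 -> C3 \in des r C1.
Proof.
rewrite !in_des => /andP[_ s1] /andP[n3 s2]; rewrite n3; exact: sreach_trans s1 s2.
Qed.

Lemma des_irr C : C \notin des r C.
Proof.
rewrite in_des; apply/negP=> /andP[_ /existsP[D /andP[c p]]]; exact: cond_acyc c p.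
Qed.

Lemma des_card C C' : C' \in des r C -> #|des r C'| < #|des r C|.
Proof.
move=> d; apply: proper_card; apply/properP; split.
  by apply/subsetP=> D dD; exact: des_trans d dD.
by exists C' => //; exact: des_irr.
Qed.

Lemma in_desS (Cs : {set {set N}}) D : (D \in desS r Cs) = [exists C in Cs, D \in des r C].
Proof.
apply/bigcupP/existsP=> [[C CC DC]|[C /andP[CC DC]]]; first by exists C; rewrite CC.
by exists C.
Qed.

Lemma desS_sub (Cs Ds : {set {set N}}) : Cs \subset Ds -> desS r Cs \subset desS r Ds.
Proof.
move=> /subsetP sub; apply/subsetP=> D; rewrite !in_desS => /existsP[C /andP[CC DC]].
by apply/existsP; exists C; rewrite sub.
Qed.

Lemma indep_recover (Cs : {set {set N}}) : independent r Cs ->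
  Cs = gmap r Cs :\: desS r (gmap r Cs).
Proof.
case/andP=> _ /forallP ind; apply/setP=> C; rewrite inE [C \in gmap r Cs]inE.
apply/idP/idP=> [CC|].
  rewrite CC /= andbT; apply/negP; rewrite in_desS => /existsP[D /andP[]]; rewrite inE.
  case/orP=> [DC CD|].
    by move: (ind C); rewrite CC /= => /forallP /(_ D); rewrite DC /= CD.
  rewrite in_desS => /existsP[D0 /andP[D0C DD0]] CD.
  move: (ind C); rewrite CC /= => /forallP /(_ D0); rewrite D0C /=.
  by rewrite (des_trans DD0 CD).
case/andP=> nd /orP[//|CD]; case/negP: nd.
rewrite in_desS; move: CD; rewrite in_desS => /existsP[D0 /andP[D0C CD0]].
by apply/existsP; exists D0; rewrite inE D0C.
Qed.

Lemma gmap_inj (Cs1 Cs2 : {set {set N}}) : independent r Cs1 -> independent r Cs2 ->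
  gmap r Cs1 = gmap r Cs2 -> Cs1 = Cs2.
Proof.
by move=> i1 i2 eq; rewrite (indep_recover i1) (indep_recover i2) eq.
Qed.

Lemma dclosed_surj (Ds : {set {set N}}) : dclosed r Ds ->
  exists2 Cs, independent r Cs & gmap r Cs = Ds.
Proof.
case/andP=> /forallP dc dsub.
exists (Ds :\: desS r Ds).
  apply/andP; split.
    apply/forallP=> C; apply/implyP; rewrite inE => /andP[nd CD].
    move: (dc C); rewrite CD /= => /andP[nt hv]; rewrite nt /=.
    case: (boolP (hasV C)) => // nh; exfalso; case/existsP: (implyP hv nh) => C' /andP[C'D c].
    case/negP: nd; rewrite in_desS; apply/existsP; exists C'; rewrite C'D /= in_des nt /=.
    by apply/existsP; exists C; rewrite c connect0.
  apply/forallP=> C1; apply/implyP; rewrite inE => /andP[nd _].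
  apply/forallP=> C2; apply/implyP; rewrite inE => /andP[_ C2D].
  apply/negP=> C1C2; case/negP: nd; rewrite in_desS; apply/existsP; exists C2.
  by rewrite C2D.
apply/setP=> D; rewrite inE; apply/idP/idP.
  case/orP; first by case/setDP.
  move=> DD; apply: (subsetP dsub); apply: (subsetP (desS_sub _)) DD.
  by apply/subsetP=> C /setDP[].
move=> DD.
pose A := [set D' in Ds | (D' == D) || (D \in des r D')].
have AD : D \in A by rewrite inE DD eqxx.
have [D' D'A D'max] := @arg_maxnP _ D (fun X => X \in A) (fun X => #|des r X|) AD.
move: D'A; rewrite inE => /andP[D'D hD].
have D'C : D' \in Ds :\: desS r Ds.
  rewrite inE D'D andbT; apply/negP; rewrite in_desS => /existsP[D'' /andP[D''D D'D'']].
  have D''A : D'' \in A.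
    rewrite inE D''D /=; case/orP: hD => [/eqP<-|DD']; first by rewrite D'D'' orbT.
    by rewrite (des_trans D'D'' DD') orbT.
  by move: (D'max D'' D''A) => /=; rewrite /geq leqNgt (des_card D'D'').
case/orP: hD => [/eqP<-|DD']; first by rewrite D'C.
apply/orP; right; rewrite in_desS; apply/existsP; exists D'; by rewrite D'C.
Qed.


Section Part1.
Hypothesis HB : forall v, connect r (snk e h) (vtx e h v).
Hypothesis HA : ~~ connect r (src e h) (snk e h) -> forall w, ~~ r (src e h) w.

Lemma noreach_snk C0 x0 : nontrivial r C0 -> vtx e h x0 \in C0 ->
  ~~ connect r (vtx e h x0) (snk e h).
Proof.
case/and3P=> sC0 _ nt xC; apply/negP=> cx; case/negP: nt.
by rewrite (scc_eq sC0 xC) in_scc cx HB.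
Qed.

Lemma key C0 C : nontrivial r C0 -> hasV C0 -> C \in des r C0 ->
  exists2 C', (C' == C0) || (C' \in des r C0) & cnd C' C.
Proof.
move=> ntC0 /existsP[x0 xC0]; rewrite in_des => /andP[ntC /existsP[C'' /andP[c0 /connectP[p pp pl]]]].
case/lastP: p pp pl => [|p' Cl] /=.
  by move=> _ ->; exists C0; rewrite ?eqxx.
rewrite rcons_path last_rcons => /andP[pp' cP] ->.
set P := last C'' p' in cP.
have cP0 : connect cnd C0 P by apply: connect_trans (connect1 c0) _; apply/connectP; exists p'.
have sC0 : is_scc r C0 by case/and3P: ntC0.
have reach b : b \in P -> connect r (vtx e h x0) b.
  by move=> bP; exact: cconn_conn sC0 cP0 xC0 bP.
have nsnk := noreach_snk ntC0 xC0.
exists P => //; apply/orP; right; rewrite in_des; apply/andP; split; last first.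
  by apply/existsP; exists C''; rewrite c0 /=; apply/connectP; exists p'.
move: (cP); case/and4P=> sP sC neq /existsP[u /andP[uP /existsP[v /andP[vC ruv]]]].
rewrite /nontrivial sP /=; apply/andP; split; apply/negP=> inP.
  have cs : connect r (src e h) v.
    by apply: connect_trans (scc_conn sP inP uP) (connect1 ruv).
  have vs : v != src e h.
    apply/negP=> /eqP vs; move: neq; rewrite (scc_eq sP inP) (scc_eq sC (_ : src e h \in Cl)) ?eqxx //.
    by rewrite -vs.
  case/connectP: cs => [[|w q]] /=; first by move=> _ vs'; move: vs; rewrite vs' eqxx.
  case/andP=> rw _ _.
  have css : connect r (src e h) (snk e h).
    by apply/negPn/negP=> ncs; move: (HA ncs w); rewrite rw.
  by case/negP: nsnk; apply: connect_trans (reach _ inP) css.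
by case/negP: nsnk; apply: reach.
Qed.

Lemma part1 (Cs : {set {set N}}) : independent r Cs -> dclosed r (gmap r Cs).
Proof.
move=> ind; move: (ind) => /andP[/forallP ntv /forallP ii].
have ntC C : C \in Cs -> nontrivial r C /\ hasV C.
  by move=> CC; move: (ntv C); rewrite CC /= => /andP[].
apply/andP; split.
  apply/forallP=> C; apply/implyP; rewrite inE => /orP[CC|].
    by have [-> ->] := ntC C CC.
  rewrite in_desS => /existsP[C0 /andP[C0C CC0]].
  move: (CC0); rewrite in_des => /andP[-> _] /=; apply/implyP=> _.
  have [n0 h0] := ntC C0 C0C.
  have [C' hC' cC'] := key n0 h0 CC0.
  apply/existsP; exists C'; rewrite cC' andbT inE.
  case/orP: hC' => [/eqP->|d]; first by rewrite C0C.
  by rewrite in_desS; apply/orP; right; apply/existsP; exists C0; rewrite C0C.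
apply/subsetP=> D; rewrite in_desS => /existsP[C /andP[]]; rewrite inE => /orP[CC DC|].
  by rewrite inE in_desS; apply/orP; right; apply/existsP; exists C; rewrite CC.
rewrite in_desS => /existsP[C0 /andP[C0C CC0]] DC.
by rewrite inE in_desS; apply/orP; right; apply/existsP; exists C0; rewrite C0C (des_trans CC0 DC).
Qed.
End Part1.
End Gen.

Import Order.TTheory GRing.Theory Num.Theory.
Local Open Scope ring_scope.

Section Flow.
Variables (T : finType) (e : rel T) (h : nat) (R : realType).
Local Notation N := (node e h).
Local Notation cap := (@cap T e h R).

Lemma bigmax_ge0 (I : finType) (P : pred I) (F : I -> R) :
  0 <= \big[Num.max/0]_(i | P i) F i.
Proof.
rewrite unlock /reducebig; elim: (index_enum I) => //= a s IH.
by case: (P a) => //=; rewrite le_max IH orbT.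
Qed.

Lemma bigmax_ge (I : finType) (P : pred I) (F : I -> R) j : P j ->
  F j <= \big[Num.max/0]_(i | P i) F i.
Proof.
move=> Pj; rewrite unlock /reducebig.
have : j \in index_enum I by rewrite mem_index_enum.
elim: (index_enum I) => //= a s IH; rewrite inE => /orP[/eqP<-|js].
  by rewrite Pj /= le_max lexx.
case: (P a) => /=; last exact: IH.
by rewrite le_max (IH js) orbT.
Qed.

Lemma rho_ge0 : 0 <= rho_star e h R.
Proof. exact: bigmax_ge0. Qed.

Lemma le_rho W : W != set0 -> (mu e h W)%:R / (#|W|)%:R <= rho_star e h R.
Proof. by move=> W0; apply: (bigmax_ge (fun W : {set T} => (mu e h W)%:R / (#|W|)%:R)). Qed.

Lemma cap_ge0 (u v : N) c : cap u v = Some c -> 0 <= c.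
Proof.
case: u => [[x|L]|[]]; case: v => [[y|M]|[]] //=; repeat case: ifP => _ //;
  case=> <- //; rewrite ?ler01 ?ler0n ?mulr_ge0 ?ler0n ?rho_ge0. all: done.
Qed.

Lemma isArcC (u v : N) : isArc u v = isArc v u.
Proof. by case: u => [[x|L]|[]]; case: v => [[y|M]|[]]. Qed.

Lemma nonarc_cap (u v : N) : ~~ isArc u v -> cap u v = Some 0.
Proof.
case: u => [[x|L]|[]]; case: v => [[y|M]|[]] //=.
- by rewrite negb_or => /andP[/negbTE-> /negbTE->].
- by rewrite negb_or => /andP[/negbTE-> _].
Qed.

Variable f : N -> N -> R.
Hypothesis Hf : is_flow f.

Lemma f_antisym (u v : N) : f v u = - f u v.
Proof. by case: Hf. Qed.

Lemma f_cap (u v : N) : cap_le (f u v) (cap u v).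
Proof. by case: Hf. Qed.

Lemma f_nonarc (u v : N) : ~~ isArc u v -> f u v = 0.
Proof.
move=> na; have := f_cap u v; have := f_cap v u.
have na' : ~~ isArc v u by rewrite isArcC.
rewrite (nonarc_cap na) (nonarc_cap na').
rewrite /= f_antisym; lra.
Qed.

Lemma noresid (u v : N) : ~~ resid f u v -> exists2 c, cap u v = Some c & f u v = c.
Proof.
rewrite /resid; case: (boolP (isArc u v)) => /= [a|na _].
  have := f_cap u v; case: (cap u v) => //= c fc /negP nlt; exists c => //.
  by apply/eqP; rewrite eq_le fc /= leNgt; apply/negP.
by exists 0; [exact: nonarc_cap | exact: f_nonarc].
Qed.

Lemma noresid_ge0 (u v : N) : ~~ resid f u v -> 0 <= f u v.
Proof. by case/noresid=> c /cap_ge0 ? ->. Qed.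

Lemma resid_lam (L : lamT e h) x : x \in val L -> resid f (lam L) (vtx e h x).
Proof. by move=> xL; rewrite /resid /= xL. Qed.

Lemma sum_cut (Y : {set N}) : snk e h \notin Y ->
  \sum_(y in Y) \sum_w f y w = \sum_(y in Y) \sum_(x in ~: Y) f y x.
Proof.
move=> _.
have -> : \sum_(y in Y) \sum_w f y w =
  \sum_(y in Y) \sum_(w in Y) f y w + \sum_(y in Y) \sum_(x in ~: Y) f y x.
  rewrite -big_split /=; apply: eq_bigr => y _.
  rewrite (bigID (fun w => w \in Y)) /=; congr (_ + _).
  by apply: eq_bigl => w; rewrite inE.
suff -> : \sum_(y in Y) \sum_(w in Y) f y w = 0 by rewrite add0r.
set S := (X in X = 0).
have : S = - S.
  rewrite {1}/S exchange_big /= -sumrN; apply: eq_bigr => y _.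
  by rewrite -sumrN; apply: eq_bigr => w _; rewrite f_antisym.
lra.
Qed.


Hypothesis Hh : (2 <= h)%N.
Hypothesis Hcl : forall v : T, exists S : {set T}, hclique e h S && (v \in S).

Lemma hdeg_pos v : (1 <= hdeg e h v)%N.
Proof.
have [S /andP[hS vS]] := Hcl v; rewrite card_gt0; apply/set0Pn; exists S.
by rewrite inE hS.
Qed.

Lemma rho_pos (v : T) : 0 < rho_star e h R.
Proof.
have [S /andP[hS vS]] := Hcl v.
have cS : #|S| = h by case/andP: hS => _ /eqP.
have S0 : S != set0 by apply/set0Pn; exists v.
apply: lt_le_trans (le_rho S0).
have m1 : (1 <= mu e h S)%N by rewrite card_gt0; apply/set0Pn; exists S; rewrite inE hS subxx.
rewrite divr_gt0 // ?ltr0n // cS; by case: h Hh.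
Qed.

Section PosFlow.
Variable v0 : T.
Let eps : R := Num.min 1 (h%:R * rho_star e h R).
Let sv := src e h.
Let tv := snk e h.
Let xv := vtx e h v0.
Let I (a b u w : N) : R := if (u == a) && (w == b) then eps else 0.
Let g (u w : N) : R := I sv xv u w - I sv xv w u + I xv tv u w - I xv tv w u.

Lemma eps_pos : 0 < eps.
Proof. by rewrite lt_min ltr01 mulr_gt0 ?ltr0n ?(rho_pos v0) //; case: h Hh. Qed.

Lemma I_ge0 a b u w : 0 <= I a b u w.
Proof. by rewrite /I; case: ifP => // _; exact: ltW eps_pos. Qed.

Lemma sumI1 a b u : \sum_w I a b u w = if u == a then eps else 0.
Proof.
rewrite /I; case: (u == a) => /=; last by rewrite big1.
by rewrite -big_mkcond /= big_pred1_eq.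
Qed.

Lemma sumI2 a b u : \sum_w I a b w u = if u == b then eps else 0.
Proof.
rewrite /I; case: (u == b) => /=; last by rewrite big1 // => w _; rewrite andbF.
rewrite (eq_bigr (fun w => if w == a then eps else 0)); last by move=> w _; rewrite andbT.
by rewrite -big_mkcond /= big_pred1_eq.
Qed.

Lemma sumg u : \sum_w g u w =
  (if u == sv then eps else 0) - (if u == xv then eps else 0)
  + (if u == xv then eps else 0) - (if u == tv then eps else 0).
Proof. by rewrite /g !big_split /= !sumrN !sumI1 !sumI2. Qed.

Lemma g_flow : is_flow g.
Proof.
split.
- move=> u w.
  have I0 a b : ~~ ((u == a) && (w == b)) -> I a b u w = 0 by rewrite /I => /negbTE->.
  have Iw := I_ge0; have ep := eps_pos.
  case: (boolP ((u == sv) && (w == xv))) => [/andP[/eqP-> /eqP->]|n1].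
    rewrite /g /I /= !eqxx /=.
    have hd : 1 <= (hdeg e h v0)%:R :> R by rewrite ler1n hdeg_pos.
    have : eps <= 1 by rewrite ge_min lexx.
    lra.
  case: (boolP ((u == xv) && (w == tv))) => [/andP[/eqP-> /eqP->]|n2].
    rewrite /g /I /= !eqxx /=.
    have : eps <= h%:R * rho_star e h R by rewrite ge_min lexx orbT.
    lra.
  have gle : g u w <= 0.
    rewrite /g (I0 _ _ n1) (I0 _ _ n2); have := Iw sv xv w u; have := Iw xv tv w u; lra.
  case E: (cap u w) => [c|] //=; have := cap_ge0 E; lra.
- by move=> u w; rewrite /g; ring.
- move=> u nu nt; rewrite sumg -/sv -/tv in nu nt *; rewrite (negbTE nu) (negbTE nt); ring.
Qed.

Lemma g_value : flow_value g = eps.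
Proof. by rewrite /flow_value sumg eqxx /=; ring. Qed.

End PosFlow.

Hypothesis Hmax : is_max_flow f.

Lemma value_pos (v : T) : 0 < flow_value f.
Proof.
case: Hmax => _ /(_ _ (g_flow v)); rewrite g_value => le.
exact: lt_le_trans (eps_pos v) le.
Qed.

Lemma lhs_val (Y : {set N}) : snk e h \notin Y ->
  \sum_(y in Y) \sum_w f y w = if src e h \in Y then flow_value f else 0.
Proof.
move=> tY.
rewrite (eq_bigr (fun y => if y == src e h then flow_value f else 0)); last first.
  move=> y yY; case: eqP => [->//|/eqP ys].
  have yt : y != snk e h by apply/negP=> /eqP yt; move: tY; rewrite -yt yY.
  by case: Hf => _ _; apply.
case sY: (src e h \in Y).
  by rewrite (bigD1 (src e h)) //= ?eqxx big1 ?addr0 // => y /andP[_ /negbTE->].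
by rewrite big1 // => y yY; case: eqP => // ys; move: sY; rewrite -ys yY.
Qed.


Local Notation r := (resid f).

Lemma sum_node (F : N -> R) :
  \sum_w F w = \sum_x F (vtx e h x) + \sum_L F (lam L) + F (src e h) + F (snk e h).
Proof.
rewrite big_sumType /= big_sumType /= big_bool /=; rewrite -!addrA; congr (_ + (_ + _)).
Qed.

Lemma le4 (a b c d x y : R) : 0 <= a -> x <= b -> 0 <= c -> y <= d ->
  x + y <= a + b + c + d.
Proof. lra. Qed.

Lemma sum_le_term (I : finType) (P : pred I) (F : I -> R) j : P j ->
  (forall i, P i -> F i <= 0) -> \sum_(i | P i) F i <= F j.
Proof.
move=> Pj neg; rewrite (bigD1 j) //=.
have : \sum_(i | P i && (i != j)) F i <= 0 by apply: sumr_le0 => i /andP[/neg].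
lra.
Qed.

Lemma flowHB (v : T) : connect r (snk e h) (vtx e h v).
Proof.
apply/negPn/negP=> nc.
set X := [set y | connect r (snk e h) y].
set Y := ~: X.
have tY : snk e h \notin Y by rewrite !inE negbK connect0.
have noXY x y : x \in X -> y \in Y -> ~~ r x y.
  rewrite !inE => cx /negP ny; apply/negP=> rxy; apply: ny; exact: connect_trans cx (connect1 rxy).
have key := sum_cut tY; rewrite lhs_val // in key.
have term y x : y \in Y -> x \in ~: Y -> f y x <= 0.
  move=> yY; rewrite setCK => xX; rewrite f_antisym.
  have := noresid_ge0 (noXY _ _ xX yY); lra.
have rhs0 : \sum_(y in Y) \sum_(x in ~: Y) f y x <= 0.
  by apply: sumr_le0 => y yY; apply: sumr_le0 => x xY; exact: term.
case sY: (src e h \in Y); rewrite sY in key.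
  by have := value_pos v; lra.
have vY : vtx e h v \in Y by rewrite !inE.
have sX : src e h \in X by move: sY; rewrite !inE => /negbFE.
have le1 : \sum_(y in Y) \sum_(x in ~: Y) f y x <= \sum_(x in ~: Y) f (vtx e h v) x.
  apply: sum_le_term => // y yY; apply: sumr_le0 => x; exact: term.
have le2 : \sum_(x in ~: Y) f (vtx e h v) x <= f (vtx e h v) (src e h).
  by apply: sum_le_term; [rewrite inE sY | move=> x; exact: term].
have fs : f (src e h) (vtx e h v) = (hdeg e h v)%:R.
  by case: (noresid (noXY _ _ sX vY)) => c /= [<-].
have hd : 1 <= (hdeg e h v)%:R :> R by rewrite ler1n hdeg_pos.
move: le2; rewrite f_antisym fs; lra.
Qed.

Lemma comb_bound (W : {set T}) :
  \sum_x ((hdeg e h x)%:R : R) <=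
  \sum_x (if x \in W then h%:R * rho_star e h R + (#|cntW e h W x|)%:R else (hdeg e h x)%:R).
Proof.
pose a x : R := if x \in W then (#|inW e h W x|)%:R else 0.
pose b x : R := if x \in W then h%:R * rho_star e h R else 0.
pose c x : R := if x \in W then (#|cntW e h W x|)%:R else (hdeg e h x)%:R.
have e1 : \sum_x (hdeg e h x)%:R <= \sum_x (a x + c x).
  apply: ler_sum => x _; rewrite /a /c; case: ifP => xW; last by rewrite add0r.
  rewrite -natrD ler_nat; apply: leq_trans (hdeg_split e h W x) _.
  by rewrite leq_add2l (outW_cnt e h xW).
have e2 : \sum_x a x <= \sum_x b x.
  rewrite /a /b -!big_mkcond /= -natr_sum (double_count e h W) sumr_const.
  have [->|W0] := eqVneq W set0.
    by rewrite (mu_set0 e Hh) muln0 cards0 mulr0n.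
  have := le_rho W0; rewrite ler_pdivrMr ?ltr0n ?card_gt0 // => hm.
  rewrite natrM -[_ *+ #|W|]mulr_natr -mulrA; apply: ler_wpM2l hm; exact: ler0n.
have -> : \sum_x (if x \in W then h%:R * rho_star e h R + (#|cntW e h W x|)%:R else (hdeg e h x)%:R)
  = \sum_x (b x + c x).
  by apply: eq_bigr => x _; rewrite /b /c; case: ifP; rewrite ?add0r.
move: e1 e2; rewrite !big_split /=; lra.
Qed.

Lemma flowHA : ~~ connect r (src e h) (snk e h) -> forall w, ~~ r (src e h) w.
Proof.
move=> nst w0; apply/negP=> rw0.
set Z := [set y | connect r (src e h) y].
have tZ : snk e h \notin Z by rewrite inE.
have sZ : src e h \in Z by rewrite inE connect0.
have noZ z x : z \in Z -> x \in ~: Z -> ~~ r z x.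
  rewrite !inE => cz /negP nx; apply/negP=> rzx; apply: nx; exact: connect_trans cz (connect1 rzx).
have key := sum_cut tZ; rewrite lhs_val // sZ in key.
have fge0 z x : z \in Z -> x \in ~: Z -> 0 <= f z x.
  by move=> zZ xZ; exact: noresid_ge0 (noZ _ _ zZ xZ).
have [x0 w0x0] : exists x0, w0 = vtx e h x0.
  by move: rw0; case: w0 => [[x0|L]|[]] // _; exists x0.
have up : flow_value f < \sum_x ((hdeg e h x)%:R : R).
  rewrite /flow_value sum_node.
  rewrite (f_nonarc (u := src e h) (v := src e h)) //.
  rewrite (f_nonarc (u := src e h) (v := snk e h)) //.
  have -> : \sum_(L : lamT e h) f (src e h) (lam L) = 0 by apply: big1 => L _; apply: f_nonarc.
  rewrite !addr0 (bigD1 x0) //= [X in _ < X](bigD1 x0) //=.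
  have lt0 : f (src e h) (vtx e h x0) < (hdeg e h x0)%:R.
    by move: rw0; rewrite w0x0 /resid /=.
  have le0 : \sum_(i | i != x0) f (src e h) (vtx e h i) <= \sum_(i | i != x0) ((hdeg e h i)%:R : R).
    by apply: ler_sum => i _; exact: (f_cap (src e h) (vtx e h i)).
  lra.
set W := [set x | vtx e h x \in Z].
pose G z := \sum_(x in ~: Z) f z x.
have Gge0 z : z \in Z -> 0 <= G z by move=> zZ; apply: sumr_ge0 => x; exact: fge0.
have Gs : \sum_x (if x \in W then 0 else (hdeg e h x)%:R) <= G (src e h).
  rewrite /G [X in _ <= X]big_mkcond /= sum_node.
  have r1 : 0 <= \sum_L (if lam L \in ~: Z then f (src e h) (lam L) else 0).
    by apply: sumr_ge0 => L _; case: ifP => // LZ; exact: fge0.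
  have r2 : 0 <= (if src e h \in ~: Z then f (src e h) (src e h) else 0).
    by case: ifP => // LZ; exact: fge0.
  have r3 : 0 <= (if snk e h \in ~: Z then f (src e h) (snk e h) else 0).
    by case: ifP => // LZ; exact: fge0.
  suff : \sum_x (if x \in W then 0 else (hdeg e h x)%:R) <=
    \sum_x (if vtx e h x \in ~: Z then f (src e h) (vtx e h x) else 0) .
    by move=> hh; apply: le_trans hh _; rewrite -!addrA lerDl !addr_ge0.
  apply: ler_sum => x _; rewrite !inE; case: ifP => xZ //=.
  have nx : vtx e h x \in ~: Z by rewrite !inE xZ.
  by case: (noresid (noZ _ _ sZ nx)) => c /= [<-] ->.
have Gv x : x \in W -> h%:R * rho_star e h R + (#|cntW e h W x|)%:R <= G (vtx e h x).
  rewrite inE => xZ; rewrite /G big_mkcond /= sum_node.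
  have r1 : 0 <= \sum_y (if vtx e h y \in ~: Z then f (vtx e h x) (vtx e h y) else 0).
    by apply: sumr_ge0 => L _; case: ifP => // LZ; exact: fge0.
  have r2 : 0 <= (if src e h \in ~: Z then f (vtx e h x) (src e h) else 0).
    by case: ifP => // LZ; exact: fge0.
  have r3 : (if snk e h \in ~: Z then f (vtx e h x) (snk e h) else 0) = h%:R * rho_star e h R.
    have nt : snk e h \in ~: Z by rewrite inE tZ.
    by rewrite nt; case: (noresid (noZ _ _ xZ nt)) => c /= [<-] ->.
  suff : (#|cntW e h W x|)%:R <=
    \sum_L (if lam L \in ~: Z then f (vtx e h x) (lam L) else 0).
    by move=> hh; rewrite r3 addrC; apply: le4 => //; rewrite r3.
  rewrite -sum1_card natr_sum big_mkcond /=; apply: ler_sum => L _.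
  case: ifP => LC; last by case: ifP => // LZ; exact: fge0.
  move: LC; rewrite inE => /and3P[nLW xL hL].
  have nLZ : lam L \in ~: Z.
    rewrite inE; apply/negP=> LZ; case/negP: nLW; apply/subsetP=> y yL.
    rewrite inE; move: LZ; rewrite !inE => cL; exact: connect_trans cL (connect1 (resid_lam yL)).
  rewrite nLZ; case: (noresid (noZ _ _ xZ nLZ)) => c /=; rewrite xL hL /= => [[<-]] ->.
  by [].
have low : \sum_x (if x \in W then h%:R * rho_star e h R + (#|cntW e h W x|)%:R
                   else (hdeg e h x)%:R) <= \sum_(z in Z) G z.
  rewrite [X in _ <= X]big_mkcond /= sum_node sZ (negbTE tZ) addr0.
  have r1 : 0 <= \sum_L (if lam L \in Z then G (lam L) else 0).
    by apply: sumr_ge0 => L _; case: ifP => // LZ; exact: Gge0.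
  have e1 : \sum_x (if x \in W then h%:R * rho_star e h R + (#|cntW e h W x|)%:R
                   else (hdeg e h x)%:R) =
    \sum_x (if x \in W then h%:R * rho_star e h R + (#|cntW e h W x|)%:R else 0) +
    \sum_x (if x \in W then 0 else (hdeg e h x)%:R).
    rewrite -big_split; apply: eq_bigr => x _ /=; case: (x \in W); rewrite ?addr0 ?add0r; reflexivity.
  have e2 : \sum_x (if x \in W then h%:R * rho_star e h R + (#|cntW e h W x|)%:R else 0)
    <= \sum_x (if vtx e h x \in Z then G (vtx e h x) else 0).
    apply: ler_sum => x _; case: ifP => xW.
      by rewrite (_ : vtx e h x \in Z) ?Gv //; move: xW; rewrite inE.
    by case: ifP => // xZ; exact: Gge0.
  lra.
have := comb_bound W; rewrite /G in low; lra.
Qed.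

End Flow.

Theorem lemma8 (T : finType) (e : rel T) (h : nat) (R : realType)
    (f : node e h -> node e h -> R) :
  symmetric e -> irreflexive e -> (2 <= h)%N ->
  (forall v : T, exists S : {set T}, hclique e h S && (v \in S)) ->
  is_max_flow f ->
  [/\ forall Cs, independent (resid f) Cs -> dclosed (resid f) (gmap (resid f) Cs),
      forall Cs1 Cs2, independent (resid f) Cs1 -> independent (resid f) Cs2 ->
        gmap (resid f) Cs1 = gmap (resid f) Cs2 -> Cs1 = Cs2 &
      forall Ds, dclosed (resid f) Ds ->
        exists2 Cs, independent (resid f) Cs & gmap (resid f) Cs = Ds].
Proof.
move=> _ _ Hh Hcl Hmax; have Hf : is_flow f by case: Hmax.
split.
- move=> Cs ind; apply: part1 ind.
    by move=> v; exact: (flowHB Hf Hh Hcl Hmax v).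
  exact: (flowHA Hf Hh).
- exact: gmap_inj.
- exact: dclosed_surj.
Qed.
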